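(* Let $Y$ be a strongly connected finite digraph on which a finite abelian group $G$ acts by automorphisms so that the action on $V_Y$ is free, let $H\le G$, $\Gamma=G/H$, $Z=Y_H$, $X=Y_G$, and $F$ an algebraically closed field of characteristic zero. Let $\pi:F[G][u]\to F[\Gamma][u]$ be induced by the projection $G\to\Gamma$. Then $\pi(\gamma_{Y/X}(u))=\gamma_{Z/X}(u)$.
   Context: Digraph $Y=(V_Y,E_Y)$ with incidence $e\mapsto(o(e),t(e))$; strongly connected means a directed path exists between any two distinct vertices. For a group $K$ acting on a digraph $W$ by automorphisms, $W_K$ is the quotient digraph (vertices $K\backslash V_W$, edges $K\backslash E_W$, induced incidence). The group $\Gamma$ acts on $Z=Y_H$ by $(gH)\cdot(H\cdot x)=H\cdot gx$, freely on vertices, with $Z_\Gamma\cong X$. For a finite abelian group $K$ acting on a finite digraph $W$ freely on vertices, $\mathcal{A}_W(w)=\sum_{o(\varepsilon)=w}t(\varepsilon)$ is $\mathbb{Z}[K]$-linear on $\mathbb{Z}V_W$, $\mathbb{Z}V_W[u]$ is free over $\mathbb{Z}[K][u]$, and $\gamma_{W/W_K}(u)=\det_{\mathbb{Z}[K][u]}(\mathcal{I}-\mathcal{A}_Wu)$. Thus $\gamma_{Y/X}$ is taken over $\mathbb{Z}[G][u]$ and $\gamma_{Z/X}$ over $\mathbb{Z}[\Gamma][u]$. *)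

(* Defs.v *)
From HB Require Import structures.
From mathcomp Require Import all_boot all_order all_algebra all_fingroup.
Set Implicit Arguments. Unset Strict Implicit. Unset Printing Implicit Defensive.
Import GRing.Theory.
Local Open Scope ring_scope.

Section GrpAlg.
Variables (K : finGroupType) (R : nzRingType).

Definition grpalg : Type := {ffun K -> R}.
HB.instance Definition _ := GRing.Zmodule.on grpalg.

Definition ga_one : grpalg := [ffun g => (g == 1%g)%:R].
Definition ga_mul (a b : grpalg) : grpalg :=
  [ffun g => \sum_(h : K) a h * b (h^-1 * g)%g].

Lemma ga_mulA : associative ga_mul.
Proof.
move=> a b c; apply/ffunP=> g; rewrite !ffunE.
transitivity (\sum_(h : K) \sum_(k : K) a h * (b (h^-1 * k)%g * c (k^-1 * g)%g)).
  apply: eq_bigr => h _; rewrite ffunE big_distrr /=.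
  rewrite (reindex_inj (mulgI (h^-1)%g)) /=; apply: eq_bigr => k _.
  by rewrite invMg invgK -mulgA mulKVg.
rewrite exchange_big /=; apply: eq_bigr => k _; rewrite ffunE big_distrl /=.
by apply: eq_bigr => h _; rewrite mulrA.
Qed.

Lemma ga_mul1r : left_id ga_one ga_mul.
Proof.
move=> a; apply/ffunP=> g; rewrite ffunE (bigD1 1%g) //= ffunE eqxx mul1r invg1 mul1g.
rewrite big1 ?addr0 // => h /negbTE nh; by rewrite ffunE nh mul0r.
Qed.

Lemma ga_mulr1 : right_id ga_one ga_mul.
Proof.
move=> a; apply/ffunP=> g; rewrite ffunE (bigD1 g) //= ffunE mulVg eqxx mulr1.
rewrite big1 ?addr0 // => h nh; rewrite ffunE.
have -> : (h^-1 * g == 1)%g = false.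
  by apply/negbTE; apply: contra nh => /eqP/(canRL (mulKVg h)); rewrite mulg1 => ->.
by rewrite mulr0.
Qed.

Lemma ga_mulDl : left_distributive ga_mul +%R.
Proof.
move=> a b c; apply/ffunP=> g; rewrite !ffunE -big_split /=.
by apply: eq_bigr => h _; rewrite ffunE mulrDl.
Qed.

Lemma ga_mulDr : right_distributive ga_mul +%R.
Proof.
move=> a b c; apply/ffunP=> g; rewrite !ffunE -big_split /=.
by apply: eq_bigr => h _; rewrite ffunE mulrDr.
Qed.

Lemma ga_one_neq0 : ga_one != 0.
Proof.
apply/eqP=> /ffunP/(_ 1%g); rewrite !ffunE eqxx => /eqP; by rewrite oner_eq0.
Qed.

HB.instance Definition _ := GRing.Zmodule_isNzRing.Build grpalg
  ga_mulA ga_mul1r ga_mulr1 ga_mulDl ga_mulDr ga_one_neq0.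

Definition gdelta (k : K) : grpalg := [ffun g => (g == k)%:R].

End GrpAlg.

Definition ga_map (K : finGroupType) (R S : nzRingType) (f : R -> S)
  (a : grpalg K R) : grpalg K S := [ffun g => f (a g)].

Definition ga_proj (gT : finGroupType) (H : {group gT}) (R : nzRingType)
  (a : grpalg gT R) : grpalg (coset_of H) R :=
  [ffun C => \sum_(g : gT | coset H g == C) a g].

(* the finite group K on the vertices.  The free R[K][u]-basis of       *)
(* R V_W[u] is given by one chosen representative r_i of each K-orbit  *)
(* of vertices; A_W r_i = sum_{o(e) = r_i} t(e) = sum_j M_ij . r_j,     *)
(* where t(e) = k_e . r_j contributes [k_e] to M_ij.                   *)
Section Gamma.
Variables (K : finGroupType) (R : nzRingType) (W Ed : finType).
Variables (VW : {set W}) (EW : {set Ed}) (o t : Ed -> W) (act : W -> K -> W).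

Definition vclasses : {set {set W}} := [set [set act w k | k : K] | w in VW].

Definition vclass (i : 'I_#|vclasses|) : {set W} := enum_val i.

Definition vrep (i : 'I_#|vclasses|) : option W := [pick x in vclass i].

Definition kof (e : Ed) (j : 'I_#|vclasses|) : K :=
  odflt 1%g [pick k : K | omap (act^~ k) (vrep j) == Some (t e)].

Definition adj_mx : 'M[grpalg K R]_#|vclasses| :=
  \matrix_(i, j) \sum_(e in EW | (vrep i == Some (o e)) && (t e \in vclass j))
                    gdelta R (kof e j).

Definition gamma : {poly grpalg K R} :=
  \det (\matrix_(i, j) ((i == j)%:R%:P - (adj_mx i j)%:P * 'X)).

End Gamma.

Definition strongly_connected (V E : finType) (o t : E -> V) : Prop :=
  forall x y : V, x != y ->
    connect (fun a b => [exists e, (o e == a) && (t e == b)]) x y.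

Definition qverts (gT : finGroupType) (H : {set gT}) (V : finType)
  (toV : {action gT &-> V}) : {set {set V}} :=
  [set [set toV x h | h in H] | x : V].

Definition qedges (gT : finGroupType) (H : {set gT}) (E : finType)
  (toE : {action gT &-> E}) : {set {set E}} :=
  [set [set toE e h | h in H] | e : E].

Definition qinc (V E : finType) (f : E -> V) (O : {set E}) : {set V} :=
  [set f e | e in O].

Definition qact_orb (gT : finGroupType) (H : {group gT}) (V : finType)
  (toV : {action gT &-> V}) (O : {set V}) (C : coset_of H) : {set V} :=
  [set toV x g | x in O, g in (C : {set gT})].

(* Main.v *)
Require Import Defs.
From HB Require Import structures.
From mathcomp Require Import all_boot all_order all_algebra all_fingroup all_field.
From mathcomp Require Import ring.
Set Implicit Arguments. Unset Strict Implicit. Unset Printing Implicit Defensive.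
Import GRing.Theory.
Local Open Scope ring_scope.



Section GAMap.
Variables (K : finGroupType) (R S : nzRingType) (f : {rmorphism R -> S}).

Definition gamap (a : grpalg K R) : grpalg K S := ga_map f a.

Lemma gamap_zmod : zmod_morphism gamap.
Proof. by move=> a b; apply/ffunP=> g; rewrite !ffunE rmorphB. Qed.
HB.instance Definition _ := GRing.isZmodMorphism.Build (grpalg K R) (grpalg K S) gamap gamap_zmod.

Lemma gamap_monoid : monoid_morphism gamap.
Proof.
split.
  by apply/ffunP=> g; rewrite !ffunE rmorph_nat.
move=> a b; apply/ffunP=> g; rewrite !ffunE rmorph_sum; apply: eq_bigr => h _.
by rewrite rmorphM !ffunE.
Qed.
HB.instance Definition _ := GRing.isMonoidMorphism.Build (grpalg K R) (grpalg K S) gamap gamap_monoid.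

Lemma gamap_delta k : gamap (gdelta R k) = gdelta S k.
Proof. by apply/ffunP=> g; rewrite !ffunE rmorph_nat. Qed.
Lemma gamap_deltaR k : (gamap : {rmorphism grpalg K R -> grpalg K S}) (gdelta R k) = gdelta S k.
Proof. exact: gamap_delta. Qed.
End GAMap.

Section Comm.
Variables (K : finGroupType) (R : comNzRingType) (Kab : abelian [set: K]).
Definition cga of abelian [set: K] : Type := grpalg K R.
HB.instance Definition _ := GRing.NzRing.on (cga Kab).
Lemma cga_mulC : @commutative (cga Kab) (cga Kab) *%R.
Proof.
move=> a b; apply/ffunP=> g; rewrite !ffunE.
rewrite (reindex_inj (inj_comp (mulgI g) (@invg_inj K))) /=.
apply: eq_bigr => h _.
rewrite mulrC invMg invgK mulgKV; congr (_ * a _).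
have /centP := subsetP Kab g (in_setT g).
by move=> /(_ _ (in_setT (h^-1)%g)) ->.
Qed.
HB.instance Definition _ := GRing.PzRing_hasCommutativeMul.Build (cga Kab) cga_mulC.
End Comm.



Lemma det_conj (R : comNzRingType) n m (A : 'M[R]_n) (B : 'M[R]_m)
  (f : 'I_n -> 'I_m) (d e : 'I_n -> R) :
  bijective f -> (forall i, d i * e i = 1) ->
  (forall i j, A i j = d i * B (f i) (f j) * e j) -> \det A = \det B.
Proof.
move=> fbij de hA.
have nm := bij_eq_card fbij; rewrite !card_ord in nm; subst m.
have finj := bij_inj fbij.
pose s := perm finj.
have -> : A = diag_mx (\row_i d i) *m (perm_mx s *m B *m (perm_mx s)^T) *m diag_mx (\row_i e i).
  apply/matrixP => i j; rewrite -row_permE tr_perm_mx -col_permE.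
  by rewrite mul_mx_diag mul_diag_mx !mxE !permE hA.
rewrite !det_mulmx !det_diag det_perm det_tr det_perm.
have -> : \prod_i (\row_i d i) 0 i * ((-1) ^+ s * \det B * (-1) ^+ s) * \prod_i (\row_i e i) 0 i
  = \det B * ((-1) ^+ s * (-1) ^+ s) * \prod_i ((\row_i d i) 0 i * (\row_i e i) 0 i).
  rewrite big_split /=.
  have h4 : forall a b c x : R, a * (b * c * b) * x = c * (b * b) * (a * x).
    by move=> a b c x; ring.
  exact: h4.
by rewrite -signr_addb addbb mulr1 big1 ?mulr1 // => i _; rewrite !mxE.
Qed.


Lemma ga_mulE (K : finGroupType) (R : nzRingType) (a b : grpalg K R) g :
  (a * b) g = \sum_h a h * b (h^-1 * g)%g.
Proof. by rewrite ffunE. Qed.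

Section Proj.
Variables (gT : finGroupType) (H : {group gT}) (R : nzRingType) (Kab : abelian [set: gT]).

Lemma normH0 x : x \in ('N(H))%g.
Proof. exact: subsetP (sub_abelian_norm Kab (subsetT H)) x (in_setT x). Qed.

Lemma cosetM0 x y : coset H (x * y)%g = (coset H x * coset H y)%g.
Proof. by rewrite morphM // normH0. Qed.

Definition gproj of abelian [set: gT] := fun a : grpalg gT R => ga_proj H a.

Lemma gproj_zmod : zmod_morphism (gproj Kab).
Proof. by move=> a b; apply/ffunP=> C; rewrite !ffunE -sumrB; apply: eq_bigr => g _; rewrite !ffunE. Qed.
HB.instance Definition _ := GRing.isZmodMorphism.Build (grpalg gT R) (grpalg (coset_of H) R) (gproj Kab) gproj_zmod.

Lemma gproj_delta k : gproj Kab (gdelta R k) = gdelta R (coset H k).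
Proof.
apply/ffunP=> C; rewrite !ffunE big_mkcond (bigD1 k) //= big1 ?addr0.
  by rewrite ffunE eqxx eq_sym; case: eqP.
by move=> g /negbTE ng; rewrite ffunE ng; case: ifP.
Qed.

Lemma gproj_monoid : monoid_morphism (gproj Kab).
Proof.
split.
  have := gproj_delta 1; rewrite morph1 => h1; exact: h1.
move=> a b; apply/ffunP=> C; rewrite !ffunE.
transitivity (\sum_(h : gT) a h * \sum_(k | coset H k == ((coset H h)^-1 * C)%g) b k).
  under eq_bigr do rewrite ga_mulE.
  rewrite exchange_big /=; apply: eq_bigr => h _.
  rewrite big_distrr (reindex_inj (mulgI h)) /=.
  apply: eq_big => [k|k _]; last by rewrite mulKg.
  rewrite cosetM0; apply/eqP/eqP => [<-|->]; by rewrite ?mulKg ?mulKVg.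
rewrite (partition_big (coset H) xpredT) //=.
apply: eq_bigr => C1 _; rewrite !ffunE big_distrl /=; apply: eq_bigr => h /eqP <-.
by [].
Qed.
HB.instance Definition _ := GRing.isMonoidMorphism.Build (grpalg gT R) (grpalg (coset_of H) R) (gproj Kab) gproj_monoid.
Lemma gproj_deltaR k : (gproj Kab : {rmorphism grpalg gT R -> grpalg (coset_of H) R}) (gdelta R k) = gdelta R (coset H k).
Proof. exact: gproj_delta. Qed.
End Proj.

Lemma gdeltaM (K : finGroupType) (R : nzRingType) (a b : K) :
  gdelta R a * gdelta R b = gdelta R (a * b)%g.
Proof.
apply/ffunP=> g; rewrite ga_mulE ffunE (bigD1 a) //= big1 ?addr0.
  rewrite !ffunE eqxx mul1r.
  suff -> : (a^-1 * g == b)%g = (g == a * b)%g by [].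
  by apply/eqP/eqP => [<-|->]; [rewrite mulKVg | rewrite mulKg].
by move=> h /negbTE nh; rewrite ffunE nh mul0r.
Qed.

Lemma det_empty (R : nzRingType) n m (A : 'M[R]_n) (B : 'M[R]_m) :
  n = 0%N -> m = 0%N -> \det A = \det B.
Proof.
have det0 (C : 'M[R]_0) : \det C = 1.
  rewrite /determinant (big_pred1 1%g) => [|s]; last first.
    by apply/esym/eqP/permP => -[].
  by rewrite odd_perm1 big_ord0 mulr1.
by move=> n0 m0; move: A B; rewrite n0 m0 => A B; rewrite !det0.
Qed.

Definition phi (F : nzRingType) : {rmorphism int -> F} := GRing.RMorphism.clone _ _ (intmul (1 : F)) _.


Section Main.
Variables (gT : finGroupType) (V E : finType) (o t : E -> V)
  (toV : {action gT &-> V}) (toE : {action gT &-> E}) (H : {group gT}).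
Hypothesis Kab : abelian [set: gT].
Hypothesis ho : forall (e : E) (g : gT), o (toE e g) = toV (o e) g.
Hypothesis ht : forall (e : E) (g : gT), t (toE e g) = toV (t e) g.
Hypothesis hfree : forall (x : V) (g : gT), toV x g = x -> g = 1%g.

Lemma gcomm (x y : gT) : (x * y = y * x)%g.
Proof. by have /centP := subsetP Kab x (in_setT x); apply; apply: in_setT. Qed.

Lemma free_inj x a b : toV x a = toV x b -> a = b.
Proof.
move=> h; have : toV (toV x a) (a^-1 * b)%g = toV x a by rewrite -actM mulKVg h.
by move/hfree=> /eqP; rewrite -eq_mulVg1 => /eqP.
Qed.

Definition orbG (x : V) : {set V} := [set toV x k | k : gT].
Definition orbH (x : V) : {set V} := [set toV x h | h in H].
Definition orbE (e : E) : {set E} := [set toE e h | h in H].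

Lemma orbG_act x g : orbG (toV x g) = orbG x.
Proof.
apply/setP=> z; apply/imsetP/imsetP => [[k _ ->]|[k _ ->]].
  by exists (g * k)%g => //; rewrite actM.
by exists (g^-1 * k)%g => //; rewrite -actM mulKVg.
Qed.

Lemma orbG_mem x y : y \in orbG x -> orbG y = orbG x.
Proof. by case/imsetP=> k _ ->; rewrite orbG_act. Qed.

Lemma orbG_self x : x \in orbG x.
Proof. by apply/imsetP; exists 1%g => //; rewrite act1. Qed.

Lemma orbH_act x h : h \in H -> orbH (toV x h) = orbH x.
Proof.
move=> hH; apply/setP=> z; apply/imsetP/imsetP => [[k kH ->]|[k kH ->]].
  by exists (h * k)%g; rewrite ?groupM // actM.
by exists (h^-1 * k)%g; rewrite ?groupM ?groupV // -actM mulKVg.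
Qed.

Lemma orbH_self x : x \in orbH x.
Proof. by apply/imsetP; exists 1%g => //; rewrite act1. Qed.

Lemma orbH_eqP x y : reflect (exists2 h, h \in H & y = toV x h) (orbH x == orbH y).
Proof.
apply: (iffP eqP) => [e|[h hH ->]]; last by rewrite orbH_act.
by have := orbH_self y; rewrite -e => /imsetP[h hH ->]; exists h.
Qed.

Lemma orbE_act e h : h \in H -> orbE (toE e h) = orbE e.
Proof.
move=> hH; apply/setP=> z; apply/imsetP/imsetP => [[k kH ->]|[k kH ->]].
  by exists (h * k)%g; rewrite ?groupM // actM.
by exists (h^-1 * k)%g; rewrite ?groupM ?groupV // -actM mulKVg.
Qed.

Lemma orbE_eqP x y : reflect (exists2 h, h \in H & y = toE x h) (orbE x == orbE y).
Proof.
apply: (iffP eqP) => [e|[h hH ->]]; last by rewrite orbE_act.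
have : y \in orbE y by apply/imsetP; exists 1%g => //; rewrite act1.
by rewrite -e => /imsetP[h hH ->]; exists h.
Qed.

Lemma qinc_o e : qinc o (orbE e) = orbH (o e).
Proof. by rewrite /qinc /orbE -imset_comp; apply: eq_imset => h /=; rewrite ho. Qed.
Lemma qinc_t e : qinc t (orbE e) = orbH (t e).
Proof. by rewrite /qinc /orbE -imset_comp; apply: eq_imset => h /=; rewrite ht. Qed.

Lemma normH x : x \in ('N(H))%g.
Proof. exact: subsetP (sub_abelian_norm Kab (subsetT H)) x (in_setT x). Qed.

Lemma cosetMM x y : coset H (x * y)%g = (coset H x * coset H y)%g.
Proof. by rewrite morphM // normH. Qed.

Lemma qactH x g : qact_orb toV (orbH x) (coset H g) = orbH (toV x g).
Proof.
rewrite /qact_orb val_coset ?normH //; apply/setP=> z; apply/imset2P/imsetP.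
  case=> y c /imsetP[h hH ->] /rcosetP[h' h'H ->] ->.
  exists (h * h')%g; rewrite ?groupM // -!actM; congr (toV x _).
  by rewrite mulgA gcomm.
case=> h hH ->; exists x (h * g)%g; rewrite ?orbH_self //.
  by apply/rcosetP; exists h.
by rewrite -!actM [(g * h)%g]gcomm.
Qed.

Lemma qactH' x (C : coset_of H) : qact_orb toV (orbH x) C = orbH (toV x (repr C)).
Proof. by rewrite -qactH coset_reprK. Qed.

Definition OZ (x : V) : {set {set V}} := [set orbH (toV x g) | g : gT].

Lemma OZ_E x : [set qact_orb toV (orbH x) C | C : coset_of H] = OZ x.
Proof.
apply/setP=> S; apply/imsetP/imsetP => [[C _ ->]|[g _ ->]].
  by exists (repr C) => //; rewrite qactH'.
by exists (coset H g) => //; rewrite qactH.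
Qed.

Lemma OZ_act x g : OZ (toV x g) = OZ x.
Proof.
apply/setP=> z; apply/imsetP/imsetP => [[k _ ->]|[k _ ->]].
  by exists (g * k)%g => //; rewrite actM.
by exists (g^-1 * k)%g => //; rewrite -actM mulKVg.
Qed.


Lemma orbH_coset x a b : (orbH (toV x a) == orbH (toV x b)) = (coset H a == coset H b).
Proof.
apply/orbH_eqP/eqP => [[hh hH e]|e].
  by rewrite -actM in e; move/free_inj: e => ->; rewrite coset_kerr.
have [z zH ->] := kercoset_rcoset (normH b) (normH a) (esym e).
by exists z => //; rewrite -actM gcomm.
Qed.

Lemma orbG_in_act x y g : (toV y g \in orbG x) = (y \in orbG x).
Proof.
apply/idP/idP => [/orbG_mem e|/orbG_mem e].
  by rewrite -e orbG_act orbG_self.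
by rewrite -e; apply/imsetP; exists g.
Qed.

Lemma orbH_in_OZ y x : (orbH y \in OZ x) = (y \in orbG x).
Proof.
apply/imsetP/imsetP => [[g _ /esym/eqP/orbH_eqP [hh hH ->]]|[g _ ->]].
  by exists (g * hh)%g => //; rewrite actM.
by exists g.
Qed.

Lemma OZ_orbG a b : orbG a = orbG b -> OZ a = OZ b.
Proof. by move=> e; have := orbG_self a; rewrite e => /imsetP[k _ ->]; rewrite OZ_act. Qed.

Lemma OZ_orbG' a b : OZ a = OZ b -> orbG a = orbG b.
Proof.
move=> e; have : orbH a \in OZ b by rewrite -e; apply/imsetP; exists 1%g; rewrite ?act1.
by rewrite orbH_in_OZ => /orbG_mem.
Qed.

Variable v0 : V.

Notation actY := (fun (x : V) (g : gT) => toV x g).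
Notation actZ := (fun (O : {set V}) (C : coset_of H) => qact_orb toV O C).
Notation clY := (vclasses [set: V] actY).
Notation clZ := (vclasses (qverts H toV) actZ).
Notation vclY := (@vclass gT V [set: V] actY).
Notation vclZ := (@vclass (coset_of H) _ (qverts H toV) actZ).
Notation vrY := (@vrep gT V [set: V] actY).
Notation vrZ := (@vrep (coset_of H) _ (qverts H toV) actZ).

Definition rY (i : 'I_#|clY|) : V := odflt v0 (vrY i).

Lemma rY_spec i : vrY i = Some (rY i) /\ vclY i = orbG (rY i).
Proof.
have [w _ eS] := imsetP (enum_valP i).
rewrite /rY /vrep; case: pickP => [x xin | none] /=.
  by split=> //; apply/esym; move: xin; rewrite /vclass eS => /orbG_mem.
by have := none w; rewrite /vclass eS orbG_self.
Qed.

Definition zZ (j : 'I_#|clZ|) : V := odflt v0 [pick y | vrZ j == Some (orbH y)].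

Lemma zZ_spec j : vrZ j = Some (orbH (zZ j)) /\ vclZ j = OZ (zZ j).
Proof.
have [w /imsetP[x _ ->] eS] := imsetP (enum_valP j).
have eS' : vclZ j = OZ x by rewrite /vclass eS OZ_E.
have [R eR] : exists R, vrZ j = Some R.
  rewrite /vrep; case: pickP => [R _ | none]; first by exists R.
  by have := none (orbH x); rewrite /vclass eS OZ_E /OZ; move/negP; case; apply/imsetP; exists 1%g; rewrite ?act1.
have : R \in vclZ j by move: eR; rewrite /vrep; case: pickP => // R' ? [<-].
rewrite eS' => /imsetP[g _ eR'].
rewrite /zZ; case: pickP => [y /eqP hy | none] /=.
  split; first exact: hy. apply: OZ_orbG; apply: OZ_orbG'.
  move: hy; rewrite eR eR' => -[/eqP/orbH_eqP[hh _ ->]].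
  by rewrite !OZ_act.
by have := none (toV x g); rewrite eR eR' eqxx.
Qed.

Lemma memOZ x : OZ x \in clZ.
Proof. by apply/imsetP; exists (orbH x); [apply/imsetP; exists x | rewrite OZ_E]. Qed.
Lemma memOY x : orbG x \in clY.
Proof. by apply/imsetP; exists x. Qed.

Definition fYZ (i : 'I_#|clY|) : 'I_#|clZ| := enum_rank_in (memOZ v0) (OZ (rY i)).
Definition fZY (j : 'I_#|clZ|) : 'I_#|clY| := enum_rank_in (memOY v0) (orbG (zZ j)).

Lemma vclZ_fYZ i : vclZ (fYZ i) = OZ (rY i).
Proof. by rewrite /vclass /fYZ enum_rankK_in ?memOZ. Qed.
Lemma vclY_fZY j : vclY (fZY j) = orbG (zZ j).
Proof. by rewrite /vclass /fZY enum_rankK_in ?memOY. Qed.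

Lemma fYZ_bij : bijective fYZ.
Proof.
exists fZY => [i|j]; apply: enum_val_inj.
  change (vclY (fZY (fYZ i)) = vclY i).
  rewrite vclY_fZY (proj2 (rY_spec i)); apply: OZ_orbG'.
  by rewrite -(proj2 (zZ_spec _)) vclZ_fYZ.
change (vclZ (fYZ (fZY j)) = vclZ j).
rewrite vclZ_fYZ (proj2 (zZ_spec j)); apply: OZ_orbG.
by rewrite -(proj2 (rY_spec _)) vclY_fZY.
Qed.

Lemma gcommQ (A B : coset_of H) : (A * B = B * A)%g.
Proof. by rewrite -(coset_reprK A) -(coset_reprK B) -!cosetMM gcomm. Qed.

Definition gi (i : 'I_#|clY|) : gT :=
  odflt 1%g [pick g | orbH (zZ (fYZ i)) == orbH (toV (rY i) g)].

Lemma gi_spec i : orbH (zZ (fYZ i)) = orbH (toV (rY i) (gi i)).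
Proof.
have : orbH (zZ (fYZ i)) \in OZ (rY i).
  by rewrite -vclZ_fYZ (proj2 (zZ_spec _)); apply/imsetP; exists 1%g => //; rewrite act1.
case/imsetP=> g _ eg; rewrite /gi; case: pickP => [g' /eqP //| none].
by have := none g; rewrite eg eqxx.
Qed.

Notation kY e j := (@kof gT V E [set: V] t actY e j).
Notation kZ Oe j := (@kof (coset_of H) _ _ (qverts H toV) (qinc t) actZ Oe j).

Lemma kY_spec e j : t e \in orbG (rY j) -> toV (rY j) (kY e j) = t e.
Proof.
move=> /imsetP[k _ ek]; rewrite /kof (proj1 (rY_spec j)) /=.
case: pickP => [k' /eqP [] //| none].
by have := none k; rewrite /= ek eqxx.
Qed.

Lemma coset_solve (A C X : coset_of H) : ((A * C)%g == X) = (C == X * A^-1)%g.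
Proof.
apply/eqP/eqP => [<-|->]; first by rewrite [(A * C)%g]gcommQ mulgK.
by rewrite gcommQ mulgVK.
Qed.

Lemma kZ_spec e j k g : t e = toV (rY j) k ->
  kZ (orbE (toE e g)) (fYZ j) = coset H (k * g * (gi j)^-1)%g.
Proof.
move=> ek; rewrite /kof (proj1 (zZ_spec (fYZ j))) qinc_t ht ek gi_spec /=.
case: pickP => [C | none] /=.
  rewrite qactH' -!actM (inj_eq (@Some_inj _)) orbH_coset cosetMM coset_reprK coset_solve => /eqP ->.
  by rewrite !cosetMM morphV ?normH.
have := none (coset H (k * g * (gi j)^-1)%g).
rewrite /= qactH' -!actM (inj_eq (@Some_inj _)) orbH_coset cosetMM coset_reprK coset_solve.
by rewrite !cosetMM morphV ?normH // eqxx.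
Qed.

Lemma adjY_E i j : adj_mx int [set: V] [set: E] o t actY i j =
  \sum_(e | o e == rY i) (if t e \in orbG (rY j) then gdelta int (kY e j) else 0).
Proof.
rewrite mxE big_mkcond [RHS]big_mkcond; apply: eq_bigr => e _.
rewrite in_setT /= (proj1 (rY_spec i)) (inj_eq (@Some_inj _)) eq_sym.
by rewrite (proj2 (rY_spec j)); case: eqP.
Qed.

Lemma adjZ_E i j : adj_mx int (qverts H toV) (qedges H toE) (qinc o) (qinc t) actZ (fYZ i) (fYZ j) =
  \sum_(e | o e == rY i) (if t e \in orbG (rY j) then
      gdelta int (coset H (kY e j * gi i * (gi j)^-1)%g) else 0).
Proof.
pose A := [set e | o e == rY i]; pose h := fun e => orbE (toE e (gi i)).
rewrite mxE (eq_bigl [pred Oe | (Oe \in h @: A) && (qinc t Oe \in vclZ (fYZ j))]); last first.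
  move=> Oe /=; rewrite andbA; congr (_ && _).
  rewrite (proj1 (zZ_spec (fYZ i))) gi_spec (inj_eq (@Some_inj _)).
  apply/andP/imsetP => [[/imsetP[e0 _ ->]]|[e]].
    rewrite -/(orbE e0) qinc_o => /orbH_eqP[hh hH oe0].
    exists (toE e0 (gi i * hh)^-1)%g.
      by rewrite inE ho oe0 -!actM mulgA mulgV act1.
    rewrite /h -actM invMg -mulgA mulVg mulg1 orbE_act //.
    by rewrite groupV.
  rewrite inE => /eqP oe ->; split.
    by apply/imsetP; exists (toE e (gi i)).
  by rewrite /h qinc_o ho oe.
rewrite [LHS]big_mkcondr /= big_imset /=; last first.
  move=> e1 e2; rewrite !inE => /eqP o1 /eqP o2 /eqP/orbE_eqP[hh hH e12].
  have e2E : e2 = toE e1 hh.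
    by rewrite -(actK toE (gi i) e2) e12 -!actM [(hh * _)%g]gcomm mulgA mulgV mul1g.
  have : toV (o e1) hh = o e1 by rewrite -ho -e2E o1 o2.
  by move/hfree => hh1; rewrite e2E hh1 act1.
apply: congr_big => // [e|e]; first by rewrite inE.
rewrite inE => /eqP oe.
rewrite /h qinc_t ht vclZ_fYZ orbH_in_OZ orbG_in_act.
case: ifP => // hte.
by rewrite (kZ_spec _ (esym (kY_spec hte))).
Qed.

Lemma KabQ : abelian [set: coset_of H].
Proof. by rewrite abelianE; apply/centsP => A _ B _; apply: gcommQ. Qed.

Lemma entry_key (F : nzRingType) i j :
  @gproj gT H F Kab (gamap (phi F) (adj_mx int [set: V] [set: E] o t actY i j)) =
  gdelta F (coset H (gi i))^-1%g *
  gamap (phi F) (adj_mx int (qverts H toV) (qedges H toE) (qinc o) (qinc t) actZ (fYZ i) (fYZ j))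
  * gdelta F (coset H (gi j)).
Proof.
rewrite adjY_E adjZ_E !rmorph_sum mulr_sumr mulr_suml; apply: eq_bigr => e _.
case: ifP => _; last by rewrite !rmorph0 mulr0 mul0r.
rewrite !gamap_deltaR gproj_deltaR !gdeltaM; congr (gdelta _ _).
rewrite !cosetMM morphV ?normH // mulgA [((coset H (gi i))^-1 * _)%g]gcommQ.
rewrite mulgK -mulgA mulVg mulg1 //.
Qed.

Lemma entry_full (F : nzRingType) i j :
  map_mx (map_poly (@gproj gT H F Kab)) (map_mx (map_poly (@gamap gT int F (phi F)))
    (\matrix_(i0, j0) (((i0 == j0)%:R)%:P -
       (adj_mx int [set: V] [set: E] o t actY i0 j0)%:P * 'X))) i j
  = (gdelta F (coset H (gi i))^-1%g)%:P *
    map_mx (map_poly (@gamap (coset_of H) int F (phi F)))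
    (\matrix_(i0, j0) (((i0 == j0)%:R)%:P -
       (adj_mx int (qverts H toV) (qedges H toE) (qinc o) (qinc t) actZ i0 j0)%:P * 'X))
     (fYZ i) (fYZ j)
    * (gdelta F (coset H (gi j)))%:P.
Proof.
rewrite !mxE !(rmorphB, rmorphM, map_polyC, map_polyX, rmorph_nat) /=.
rewrite (inj_eq (bij_inj fYZ_bij)) mulrBr mulrBl.
congr (_ - _).
  case: eqP => [->|_]; last by rewrite mulr0 mul0r.
  by rewrite mulr1 -polyCM gdeltaM mulVg.
rewrite !map_polyC !map_polyX mulrA -(mulrA _ 'X) -commr_polyX mulrA -!polyCM; congr (_%:P * _).
by have := entry_key F i j; rewrite !mxE; apply.
Qed.

Lemma core (F : closedFieldType) :
  map_poly (@ga_proj gT H F)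
    (map_poly (ga_map (fun z : int => z%:~R : F))
       (gamma int [set: V] [set: E] o t actY))
  = map_poly (ga_map (fun z : int => z%:~R : F))
      (gamma int (qverts H toV) (qedges H toE) (qinc o) (qinc t) actZ).
Proof.
have e1 : @ga_proj gT H F = @gproj gT H F Kab := erefl.
have e2 : @ga_map gT int F (fun z : int => z%:~R : F) = @gamap gT int F (phi F) := erefl.
have e3 : @ga_map (coset_of H) int F (fun z : int => z%:~R : F) = @gamap (coset_of H) int F (phi F) := erefl.
rewrite e1 e2 e3 /gamma -!det_map_mx.
apply: (@det_conj {poly @cga _ F KabQ} _ _ _ _ fYZ
   (fun i => (gdelta F (coset H (gi i))^-1%g)%:P) (fun j => (gdelta F (coset H (gi j)))%:P)).
- exact: fYZ_bij.
- by move=> i /=; rewrite -polyCM gdeltaM mulVg.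
- by move=> i j; exact: entry_full.
Qed.

End Main.

Theorem theorem3p6 (gT : finGroupType) (V E : finType) (o t : E -> V)
  (toV : {action gT &-> V}) (toE : {action gT &-> E})
  (H : {group gT}) (F : closedFieldType) :
  abelian [set: gT] ->
  strongly_connected o t ->
  (forall (e : E) (g : gT), o (toE e g) = toV (o e) g) ->
  (forall (e : E) (g : gT), t (toE e g) = toV (t e) g) ->
  (forall (x : V) (g : gT), toV x g = x -> g = 1%g) ->
  [pchar F] =i pred0 ->
  map_poly (@ga_proj gT H F)
    (map_poly (ga_map (fun z : int => z%:~R : F))
       (gamma int [set: V] [set: E] o t (fun (x : V) (g : gT) => toV x g)))
  = map_poly (ga_map (fun z : int => z%:~R : F))
      (gamma int (qverts H toV) (qedges H toE) (qinc o) (qinc t) (fun (O : {set V}) (C : coset_of H) => qact_orb toV O C)).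
Proof.
move=> Kab _ ho ht hfree _.
case: (pickP (fun _ : V => true)) => [v0 _ | V0].
  exact: (@core gT V E o t toV toE H Kab ho ht hfree v0 F).
have cV : #|V| = 0%N by apply: eq_card0 => x; exact: V0 x.
have e1 : @ga_proj gT H F = @gproj gT H F Kab := erefl.
have e2 : @ga_map gT int F (fun z : int => z%:~R : F) = @gamap gT int F (phi F) := erefl.
have e3 : @ga_map (coset_of H) int F (fun z : int => z%:~R : F) = @gamap (coset_of H) int F (phi F) := erefl.
rewrite e1 e2 e3 /gamma -!det_map_mx; apply: det_empty.
  apply/eqP; rewrite -leqn0 -cV -cardsT; exact: leq_imset_card.
apply/eqP; rewrite -leqn0 -cV; apply: leq_trans (leq_imset_card _ _) _.
exact: leq_imset_card.
Qed.
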